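(* For every natural number $n \geq 2$, there exists a regular graph $G_n$ with $\chi(G_n) = n$ and $\chi_2(G_n) = 2\chi(G_n)$.
   Context: All graphs are finite and simple. A proper $k$-colouring of a graph $G$ is a map $c\colon V(G)\to[k]$ with $c(u)\neq c(v)$ for every edge $uv$; $\chi(G)$ is the chromatic number. For an integer $r\ge 1$, an $r$-dynamic $k$-colouring of $G$ is a proper $k$-colouring $c$ such that for every vertex $v$, the set $c(N(v))$ of colours used on the neighbourhood $N(v)$ has size at least $\min\{r, d(v)\}$, where $d(v)$ is the degree of $v$. The $r$-dynamic chromatic number $\chi_r(G)$ is the least $k$ such that $G$ has an $r$-dynamic $k$-colouring. In particular $\chi_2(G)$ (the dynamic chromatic number) is the least number of colours in a proper colouring in which the neighbourhood of every vertex of degree at least $2$ is not monochromatic. *)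

(* Defs.v *)
From mathcomp Require Import all_boot.
Unset Printing Implicit Defensive.

Definition simple_graph {T : finType} (e : rel T) : Prop :=
  irreflexive e /\ symmetric e.

Definition nbhd {T : finType} (e : rel T) (v : T) : {set T} := [set u | e v u].

Definition deg {T : finType} (e : rel T) (v : T) : nat := #|nbhd e v|.

Definition regular {T : finType} (e : rel T) : Prop :=
  exists d, forall v, deg e v = d.

Definition proper_colouring {T : finType} (e : rel T) (k : nat) (c : T -> 'I_k) : Prop :=
  forall u v, e u v -> c u != c v.

Definition dynamic_colouring {T : finType} (e : rel T) (r k : nat) (c : T -> 'I_k) : Prop :=
  proper_colouring e k c /\
  (forall v, minn r (deg e v) <= #|c @: nbhd e v|).

Definition chromatic_number_is {T : finType} (e : rel T) (n : nat) : Prop :=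
  (exists c, proper_colouring e n c) /\
  (forall k (c : T -> 'I_k), proper_colouring e k c -> n <= k).

Definition dyn_chromatic_number_is {T : finType} (e : rel T) (r n : nat) : Prop :=
  (exists c, dynamic_colouring e r n c) /\
  (forall k (c : T -> 'I_k), dynamic_colouring e r k c -> n <= k).

(* Main.v *)
Require Import Defs.
From mathcomp Require Import all_boot zify.
From Stdlib Require Import Lia.
Set Warnings "-notation-overridden".
Set Implicit Arguments. Unset Strict Implicit. Unset Printing Implicit Defensive.

Definition qq (m : nat) := (m.+2 * (2 * m.+2) * m.+2).+1.
Definition SetsN (m : nat) := {A : {set 'I_(qq m)} | #|A| == m.+2}.
Definition phi (m : nat) := #|[set A : SetsN m | (ord0 : 'I_(qq m)) \in val A]|.

Definition sw (T : eqType) (r s : T) (x : T) : T := if x == r then s else if x == s then r else x.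
Lemma swK (T : eqType) (r s : T) : involutive (sw r s).
Proof.
move=> x; rewrite /sw; case: (eqVneq x r) => [->|xr].
  by rewrite eqxx; case: eqVneq.
case: (eqVneq x s) => [->|xs]; first by rewrite eqxx.
by rewrite (negPf xr) (negPf xs).
Qed.

Lemma swS_proof m (r s : 'I_(qq m)) (A : SetsN m) : #|sw r s @: val A| == m.+2.
Proof. by rewrite card_imset; [exact: (valP A) | exact: (inv_inj (@swK _ r s))]. Qed.
Definition swS m (r s : 'I_(qq m)) (A : SetsN m) : SetsN m := exist (fun B : {set 'I_(qq m)} => #|B| == m.+2) _ (swS_proof r s A).
Lemma swSK m (r s : 'I_(qq m)) : involutive (swS r s).
Proof.
move=> A; apply: val_inj => /=.
by rewrite -imset_comp (eq_imset _ (@swK _ r s)) imset_id.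
Qed.

Lemma phi_r m (r : 'I_(qq m)) : #|[set A : SetsN m | r \in val A]| = phi m.
Proof.
rewrite /phi -(card_preimset _ (inv_inj (@swSK m r ord0))).
apply: eq_card => A; rewrite !inE /=.
rewrite (can2_imset_pre _ (@swK _ r ord0) (@swK _ r ord0)) inE.
by rewrite /sw eqxx.
Qed.

Lemma phi_gt0 m : 0 < phi m.
Proof.
have le : m.+2 <= qq m by rewrite /qq; nia.
pose A0 := [set widen_ord le j | j : 'I_m.+2].
have cA : #|A0| == m.+2.
  rewrite card_imset ?card_ord // => a b /(congr1 val) /= h; exact: val_inj.
pose A : SetsN m := exist _ A0 cA.
rewrite /phi card_gt0; apply/set0Pn; exists A; rewrite inE /=.
by apply/imsetP; exists ord0 => //; apply: val_inj.
Qed.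

Definition X m := (bool * 'I_(phi m))%type.
Definition Core m := ('I_(qq m) * 'I_(m.+2) * X m)%type.
Definition Fv m := ('I_(m.+2) * SetsN m * bool)%type.
Definition V m : finType := (Core m + Fv m)%type.
Definition adj m (u v : V m) : bool :=
  match u, v with
  | inl (r,i,_), inl (r',j,_) => (r == r') && (i != j)
  | inl (r,i,_), inr (j,A,_) => (i == j) && (r \in val A)
  | inr (j,A,_), inl (r,i,_) => (i == j) && (r \in val A)
  | inr _, inr _ => false
  end.
Arguments adj : clear implicits.

Lemma card_sumP (A B : finType) (P : pred (A + B)%type) :
  #|[set u | P u]| = #|[set a | P (inl a)]| + #|[set b | P (inr b)]|.
Proof. by rewrite -!sum1dep_card big_sumType. Qed.

Lemma simple_adj m : simple_graph (adj m).
Proof.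
split.
  by move=> [[[r i] x]|[[i A] b]] //=; rewrite !eqxx.
move=> [[[r i] x]|[[i A] b]] [[[r' j] y]|[[j' A'] b']] //=.
by rewrite eq_sym (eq_sym i).
Qed.

Definition dd m := m.+2 * (2 * phi m).

Lemma cardX m : #|{: X m}| = 2 * phi m.
Proof. by rewrite card_prod card_bool card_ord. Qed.

Lemma deg_adj m v : deg (adj m) v = dd m.
Proof.
rewrite /deg /nbhd card_sumP.
case: v => [[[r i] x]|[[i A] b]] /=.
- have -> : [set a : Core m | adj m (inl (r, i, x)) (inl a)] =
            setX (setX [set r] [set~ i]) [set: X m].
    by apply/setP => -[[r' j] y]; rewrite !inE /= andbT [r' == r]eq_sym [j == i]eq_sym.
  have -> : [set a : Fv m | adj m (inl (r, i, x)) (inr a)] =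
            setX (setX [set i] [set A : SetsN m | r \in val A]) [set: bool].
    by apply/setP => -[[j A] b]; rewrite !inE /= andbT eq_sym.
  rewrite !cardsX !cards1 cardsC1 phi_r !cardsT card_ord card_bool cardX /dd.
  simpl; nia.
- have -> : [set a : Core m | adj m (inr (i, A, b)) (inl a)] =
            setX (setX (val A) [set i]) [set: X m].
    by apply/setP => -[[r' j] y]; rewrite !inE /= andbT andbC eq_sym.
  have -> : [set a : Fv m | adj m (inr (i, A, b)) (inr a)] = set0.
    by apply/setP => -[[j A'] b']; rewrite !inE.
  by rewrite !cardsX cards1 cards0 cardsT cardX (eqP (valP A)) muln1 addn0.
Qed.

Lemma regular_adj m : regular (adj m).
Proof. by exists (dd m); apply: deg_adj. Qed.

Definition oth m (i : 'I_m.+2) : 'I_m.+2 := if i == ord0 then ord_max else ord0.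
Lemma oth_neq m (i : 'I_m.+2) : oth i != i.
Proof. by rewrite /oth; case: (eqVneq i ord0) => [->|]; [|rewrite eq_sym]. Qed.

Definition col1 m (v : V m) : 'I_m.+2 :=
  match v with inl (_,i,_) => i | inr (i,_,_) => oth i end.

Lemma col1_proper m : proper_colouring (adj m) m.+2 (@col1 m).
Proof.
move=> [[[r i] x]|[[i A] b]] [[[r' j] y]|[[j' A'] b']] //=.
- by case/andP.
- by case/andP => /eqP <- _; rewrite eq_sym oth_neq.
- by case/andP => /eqP -> _; rewrite oth_neq.
Qed.

Definition y0 m : 'I_(phi m) := Ordinal (phi_gt0 m).
Definition x0 m : X m := (false, y0 m).

Lemma chi_lb m k (c : V m -> 'I_k) : proper_colouring (adj m) k c -> m.+2 <= k.
Proof.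
move=> Hp.
pose g (i : 'I_m.+2) := c (inl (ord0, i, x0 m)).
have gi : injective g.
  move=> i j Hij; apply/eqP; apply/negPn/negP => nij.
  have := Hp (inl (ord0, i, x0 m)) (inl (ord0, j, x0 m)).
  by rewrite /= => /(_ nij); rewrite -/(g i) -/(g j) Hij eqxx.
by have := leq_card g gi; rewrite !card_ord.
Qed.

Lemma lo_proof n (i : 'I_n) : i < 2 * n.
Proof. have := ltn_ord i; lia. Qed.
Lemma hi_proof n (i : 'I_n) : i + n < 2 * n.
Proof. have := ltn_ord i; lia. Qed.
Definition lo n (i : 'I_n) : 'I_(2 * n) := Ordinal (lo_proof i).
Definition hi n (i : 'I_n) : 'I_(2 * n) := Ordinal (hi_proof i).

Definition col2 m (v : V m) : 'I_(2 * m.+2) :=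
  match v with
  | inl (_, i, (b, _)) => if b then hi i else lo i
  | inr (i, _, _) => lo (oth i)
  end.

Lemma lo_hi n (i j : 'I_n) : lo i != hi j.
Proof. apply/eqP => /(congr1 val) /=; have := ltn_ord i; lia. Qed.
Lemma lo_inj n (i j : 'I_n) : (lo i == lo j) = (i == j).
Proof. by apply/eqP/eqP => [/(congr1 val) /= /val_inj|->]. Qed.
Lemma hi_inj n (i j : 'I_n) : (hi i == hi j) = (i == j).
Proof.
apply/eqP/eqP => [h|->] //; apply: val_inj.
by move/(congr1 val): h => /= /eqP; rewrite eqn_add2r => /eqP ->.
Qed.

Lemma col2_dyn m : dynamic_colouring (adj m) 2 (2 * m.+2) (@col2 m).
Proof.
split.
  move=> [[[r i] [b x]]|[[i A] b]] [[[r' j] [b' y]]|[[j' A'] b']] //=.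
  - case/andP => _ nij; case: b; case: b'; rewrite ?lo_inj ?hi_inj //.
      by rewrite eq_sym lo_hi.
    by rewrite lo_hi.
  - case/andP => /eqP <- _; case: b; last by rewrite lo_inj eq_sym oth_neq.
    by rewrite eq_sym lo_hi.
  - case/andP => /eqP -> _; case: b'; first by rewrite lo_hi.
    by rewrite lo_inj oth_neq.
move=> v; apply: leq_trans (geq_minl _ _) _.
have key : forall r j, adj m v (inl (r, j, (false, y0 m))) ->
                      adj m v (inl (r, j, (true, y0 m))) ->
                      1 < #|[set col2 u | u in nbhd (adj m) v]|.
  move=> r j h1 h2; apply/card_gt1P.
  exists (lo j), (hi j); split; last exact: lo_hi.
    by apply/imsetP; exists (inl (r, j, (false, y0 m))); rewrite ?inE.
  by apply/imsetP; exists (inl (r, j, (true, y0 m))); rewrite ?inE.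
case: v key => [[[r i] x]|[[i A] b]] key.
  by apply: (key r (oth i)) => /=; rewrite eqxx eq_sym oth_neq.
have : 0 < #|val A| by rewrite (eqP (valP A)).
case/card_gt0P => r rA.
by apply: (key r i) => /=; rewrite eqxx rA.
Qed.

Lemma dd_ge2 m : 2 <= dd m.
Proof. have := phi_gt0 m; rewrite /dd; nia. Qed.

Lemma pigeon (I J : finType) (h : I -> J) (N : nat) :
  #|J| * N < #|I| -> exists y, N < #|[set x | h x == y]|.
Proof.
move=> H; case: (boolP [exists y, N < #|[set x | h x == y]|]) => [/existsP //|].
rewrite negb_exists => /forallP Hn.
have : #|I| <= #|J| * N.
  rewrite -sum1_card (partition_big h predT) //=.
  rewrite -[#|J|]sum1_card big_distrl /=.
  apply: leq_sum => y _; rewrite mul1n sum1dep_card.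
  by have := Hn y; rewrite -leqNgt.
by rewrite leqNgt H.
Qed.

Lemma dyn_lb m k (c : V m -> 'I_k) : dynamic_colouring (adj m) 2 k c -> 2 * m.+2 <= k.
Proof.
case=> Hp Hd; rewrite leqNgt; apply/negP => Hk.
pose rho r i := c (inl (r, i, x0 m)).
have mono : forall r, [exists i, [forall x, c (inl (r, i, x)) == rho r i]].
  move=> r; case: (boolP [exists i, [forall x, c (inl (r, i, x)) == rho r i]]) => //.
  rewrite negb_exists => /forallP Hn; exfalso.
  have Hx i : exists x, c (inl (r, i, x)) != rho r i.
    by move: (Hn i); rewrite negb_forall => /existsP.
  pose xi i := odflt (x0 m) [pick x | c (inl (r, i, x)) != rho r i].
  have xiP i : c (inl (r, i, xi i)) != rho r i.
    rewrite /xi; case: pickP => [//|H]; case: (Hx i) => x; by rewrite H.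
  pose g (p : 'I_m.+2 * bool) := if p.2 then c (inl (r, p.1, xi p.1)) else rho r p.1.
  have gi : injective g.
    move=> [i b] [j b'] /=; rewrite /g /=.
    case: (eqVneq i j) => [<-|nij].
      by case: b; case: b' => // h; [move: (xiP i); rewrite h eqxx | move: (xiP i); rewrite h eqxx].
    have adjij : forall x y, c (inl (r, i, x)) != c (inl (r, j, y)).
      by move=> x y; apply: Hp => /=; rewrite eqxx nij.
    by case: b; case: b' => /eqP; rewrite /rho (negbTE (adjij _ _)).
  have := leq_card g gi; rewrite card_prod card_bool !card_ord => H.
  by move: Hk; rewrite ltnNge mulnC H.
pose ir r := odflt ord0 [pick i | [forall x, c (inl (r, i, x)) == rho r i]].
have irP r x : c (inl (r, ir r, x)) = rho r (ir r).
  rewrite /ir; case: pickP => [i /forallP /(_ x) /eqP //|H].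
  by move: (mono r) => /existsP [i]; rewrite H.
pose h r := (ir r, rho r (ir r)).
have [y Hy] : exists y, m.+1 < #|[set r | h r == y]|.
  apply: pigeon; rewrite card_prod !card_ord /qq; nia.
pose B := [set r | h r == y].
pose s := take m.+2 (enum B).
have us : uniq s by rewrite take_uniq // enum_uniq.
have ss : size s = m.+2 by rewrite size_takel // -cardE.
have cA : #|[set r in s]| == m.+2.
  by rewrite cardsE (card_uniqP us) ss.
pose A : SetsN m := exist (fun B : {set 'I_(qq m)} => #|B| == m.+2) _ cA.
have sub : [set c u | u in nbhd (adj m) (inr (y.1, A, false))] \subset [set y.2].
  apply/subsetP => z /imsetP [u]; rewrite inE => hu ->.
  case: u hu => [[[r i] x]|[[j A'] b]] //=; rewrite /nbhd inE //= => /andP [/eqP -> rA].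
  have : r \in B by move: rA; rewrite inE => /mem_take; rewrite mem_enum.
  rewrite inE => /eqP hr.
  by rewrite -hr /= irP ?inE.
have := subset_leq_card sub; rewrite cards1 => le1.
have := Hd (inr (y.1, A, false)); rewrite deg_adj (minn_idPl (dd_ge2 m)) => le2.
by have := leq_trans le2 le1.
Qed.

Theorem theorem1p2 :
  forall n : nat, 2 <= n ->
  exists (T : finType) (e : rel T),
    [/\ simple_graph e, regular e,
        chromatic_number_is e n &
        dyn_chromatic_number_is e 2 (2 * n)].
Proof.
case=> [|[|m]] // _.
exists (V m), (adj m); split.
- exact: simple_adj.
- exact: regular_adj.
- split; [by exists (@col1 m); exact: col1_proper | exact: chi_lb].
- split; [by exists (@col2 m); exact: col2_dyn | exact: dyn_lb].
Qed.
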